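(* Let $\alpha$ be a sentence, $\phi,\psi,\beta$ formulas, and $\Gamma$ a set of formulas. If $\Gamma,\alpha\vdash\phi$ and $\Gamma,\beta\vdash\psi$, then $\Gamma,\alpha\vee\beta\vdash\phi\vee\psi$.
   Context: Fix a countable predicate language $\mathcal L$ consisting of variables, constant symbols and predicate symbols (so terms are just variables and constants), with connectives $\to$, $\&$, the propositional constant $0$ and quantifiers $\forall,\exists$. Abbreviations: $\phi\wedge\psi$ is $\phi\&(\phi\to\psi)$; $\phi\vee\psi$ is $((\phi\to\psi)\to\psi)\wedge((\psi\to\phi)\to\phi)$; $\neg\phi$ is $\phi\to 0$; $1$ is $0\to 0$; $\beta^n$ is $\beta\&\cdots\&\beta$ ($n$ factors). $\phi(x/t)$ denotes the result of substituting the term $t$ for the free occurrences of $x$ in $\phi$. A sentence is a formula with no free variables; a theory is any set of formulas. Hájek's basic predicate logic BL$\forall$ has the axiom schemata (A1) $(\phi\to\psi)\to((\psi\to\chi)\to(\phi\to\chi))$; (A2) $(\phi\&\psi)\to\phi$; (A3) $(\phi\&\psi)\to(\psi\&\phi)$; (A4) $(\phi\&(\phi\to\psi))\to(\psi\&(\psi\to\phi))$; (A5) $(\phi\to(\psi\to\chi))\to((\phi\&\psi)\to\chi)$; (A6) $((\phi\&\psi)\to\chi)\to(\phi\to(\psi\to\chi))$; (A7) $((\phi\to\psi)\to\chi)\to(((\psi\to\phi)\to\chi)\to\chi)$; (A8) $0\to\phi$; ($\forall$1) $\forall x\phi\to\phi(x/t)$ and ($\exists$1) $\phi(x/t)\to\exists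 x\phi$, for $t$ substitutable for $x$ in $\phi$; ($\forall$2) $\forall x(\phi\to\psi)\to(\phi\to\forall x\psi)$, ($\exists$2) $\forall x(\psi\to\phi)\to(\exists x\psi\to\phi)$ and (Lin) $\forall x(\psi\vee\phi)\to((\forall x\psi)\vee\phi)$, each with $x$ not free in $\phi$; its rules are modus ponens (from $\phi$ and $\phi\to\psi$ infer $\psi$) and generalization (from $\phi$ infer $\forall x\phi$). The logic $\vdash$ extends BL$\forall$ by the axiom schema (RC) $\forall x(\chi\&\chi)\to((\forall x\chi)\&(\forall x\chi))$ for every formula $\chi$, and the infinitary rule (Inf): from all of $\phi\vee(\alpha\to\beta^n)$, $n\in\mathbb N$, infer $\phi\vee(\alpha\to(\alpha\&\beta))$, where $\phi,\alpha,\beta$ are sentences. A proof from $\Gamma$ is a sequence $(\phi_i)_{i\le\xi}$ indexed by the ordinals up to some ordinal $\xi$ such that each $\phi_i$ is an axiom of BL$\forall$, an instance of (RC), a member of $\Gamma$, or is obtained from formulas in $\{\phi_j: j<i\}$ by modus ponens, generalization, or (Inf). $\Gamma\vdash\phi$ means there is a proof from $\Gamma$ whose last member is $\phi$; $\Gamma,\psi\vdash\phi$ means $\Gamma\cup\{\psi\}\vdash\phi$. *)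

(* Defs.v *)
(* Hajek's BL-forall extended by (RC) and the infinitary rule (Inf). *)
From Stdlib Require Import List Arith PeanoNat.
Import ListNotations.

Inductive term : Type :=
| tvar : nat -> term
| tconst : nat -> term.

Inductive form : Type :=
| fatom : nat -> list term -> form
| fimp : form -> form -> form
| fconj : form -> form -> form      (* strong conjunction & *)
| fzero : form
| fall : nat -> form -> form
| fex : nat -> form -> form.

Definition fwedge (p q : form) : form := fconj p (fimp p q).
Definition fvee (p q : form) : form :=
  fwedge (fimp (fimp p q) q) (fimp (fimp q p) p).
Definition fneg (p : form) : form := fimp p fzero.
Definition fone : form := fimp fzero fzero.
(* fpow b n = b & ... & b with (n+1) factors, i.e. beta^(n+1) *)
Fixpoint fpow (b : form) (n : nat) : form :=
  match n with
  | 0 => b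
  | S k => fconj b (fpow b k)
  end.

Definition term_has_var (x : nat) (t : term) : bool :=
  match t with tvar y => Nat.eqb x y | tconst _ => false end.

Fixpoint free_in (x : nat) (p : form) : bool :=
  match p with
  | fatom _ ts => existsb (term_has_var x) ts
  | fimp a b | fconj a b => free_in x a || free_in x b
  | fzero => false
  | fall y a | fex y a => if Nat.eqb x y then false else free_in x a
  end.

Definition sentence (p : form) : Prop := forall x, free_in x p = false.

Definition subst_term (x : nat) (t s : term) : term :=
  match s with
  | tvar y => if Nat.eqb x y then t else s
  | tconst _ => s
  end.

Fixpoint subst (x : nat) (t : term) (p : form) : form :=
  match p with
  | fatom P ts => fatom P (map (subst_term x t) ts)
  | fimp a b => fimp (subst x t a) (subst x t b)
  | fconj a b => fconj (subst x t a) (subst x t b)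
  | fzero => fzero
  | fall y a => if Nat.eqb x y then p else fall y (subst x t a)
  | fex y a => if Nat.eqb x y then p else fex y (subst x t a)
  end.

Fixpoint substitutable (x : nat) (t : term) (p : form) : bool :=
  match p with
  | fatom _ _ => true
  | fimp a b | fconj a b => substitutable x t a && substitutable x t b
  | fzero => true
  | fall y a | fex y a =>
      if Nat.eqb x y then true
      else (negb (free_in x a) || negb (term_has_var y t)) && substitutable x t a
  end.

Inductive axiom : form -> Prop :=
| ax1 p q r : axiom (fimp (fimp p q) (fimp (fimp q r) (fimp p r)))
| ax2 p q : axiom (fimp (fconj p q) p)
| ax3 p q : axiom (fimp (fconj p q) (fconj q p))
| ax4 p q : axiom (fimp (fconj p (fimp p q)) (fconj q (fimp q p)))
| ax5 p q r : axiom (fimp (fimp p (fimp q r)) (fimp (fconj p q) r))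
| ax6 p q r : axiom (fimp (fimp (fconj p q) r) (fimp p (fimp q r)))
| ax7 p q r : axiom (fimp (fimp (fimp p q) r) (fimp (fimp (fimp q p) r) r))
| ax8 p : axiom (fimp fzero p)
| ax_all1 x t p : substitutable x t p = true ->
    axiom (fimp (fall x p) (subst x t p))
| ax_ex1 x t p : substitutable x t p = true ->
    axiom (fimp (subst x t p) (fex x p))
| ax_all2 x p q : free_in x p = false ->
    axiom (fimp (fall x (fimp p q)) (fimp p (fall x q)))
| ax_ex2 x p q : free_in x p = false ->
    axiom (fimp (fall x (fimp q p)) (fimp (fex x q) p))
| ax_lin x p q : free_in x p = false ->
    axiom (fimp (fall x (fvee q p)) (fvee (fall x q) p))
| ax_rc x c : axiom (fimp (fall x (fconj c c)) (fconj (fall x c) (fall x c))).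

Definition theory := form -> Prop.
Definition add (G : theory) (a : form) : theory := fun f => G f \/ f = a.

(* This is exactly the set of last members of (ordinal-indexed) proofs. *)
Inductive prv (G : theory) : form -> Prop :=
| prv_ax p : axiom p -> prv G p
| prv_hyp p : G p -> prv G p
| prv_mp p q : prv G p -> prv G (fimp p q) -> prv G q
| prv_gen x p : prv G p -> prv G (fall x p)
| prv_inf p a b : sentence p -> sentence a -> sentence b ->
    (forall n, prv G (fvee p (fimp a (fpow b n)))) ->
    prv G (fvee p (fimp a (fconj a b))).

(* Main.v *)
Require Import Defs.
From Stdlib Require Import List Arith PeanoNat Bool.
Import ListNotations.

Local Notation "a =>> b" := (fimp a b) (at level 90, right associativity).

Lemma AX G p : axiom p -> prv G p. Proof. apply prv_ax. Qed.
Lemma MP G p q : prv G p -> prv G (p =>> q) -> prv G q.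
Proof. apply prv_mp. Qed.

Lemma trans G a b c : prv G (a=>>b) -> prv G (b=>>c) -> prv G (a=>>c).
Proof. intros H1 H2. apply (MP _ _ _ H2). apply (MP _ _ _ H1). apply AX, ax1. Qed.
Lemma suffix G a b c : prv G (a=>>b) -> prv G ((b=>>c)=>>(a=>>c)).
Proof. intros H. apply (MP _ _ _ H). apply AX, ax1. Qed.
Lemma weak G a b : prv G (a =>> (b =>> a)).
Proof. apply (MP _ (fimp (fconj a b) a)). apply AX, ax2. apply AX, ax6. Qed.
Lemma exch_thm G a b c : prv G ((a=>>(b=>>c)) =>> (b=>>(a=>>c))).
Proof.
  eapply trans. apply AX, ax5.
  eapply trans. apply suffix. apply AX, (ax3 b a). apply AX, ax6.
Qed.
Lemma exch G a b c : prv G (a=>>(b=>>c)) -> prv G (b=>>(a=>>c)).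
Proof. intros H. eapply MP. exact H. apply exch_thm. Qed.
Lemma idf G a : prv G (a=>>a).
Proof. eapply MP. 2: apply exch, (weak G a (fimp fzero fzero)). apply AX, ax8. Qed.
Lemma assertion G a b : prv G (a =>> ((a=>>b)=>>b)).
Proof. apply exch, idf. Qed.
Lemma prefix G a b c : prv G ((b=>>c)=>>((a=>>b)=>>(a=>>c))).
Proof. apply exch, AX, ax1. Qed.
Lemma pairing G a b: prv G (a =>> (b =>> fconj a b)).
Proof. eapply MP. apply idf. apply AX, ax6. Qed.
Lemma ctx_post G h P Q R : prv G (P=>>Q) -> prv G (h=>>(Q=>>R)) -> prv G (h=>>(P=>>R)).
Proof. intros H1 H2. eapply trans. exact H2. apply suffix, H1. Qed.
Lemma ctx_pre G k h U W : prv G (k=>>(h=>>U)) -> prv G (U=>>W) -> prv G (k=>>(h=>>W)).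
Proof. intros H1 H2. eapply trans. exact H1. eapply MP. exact H2. apply prefix. Qed.
Lemma wedge_l G X Y : prv G (fwedge X Y =>> X). Proof. apply AX, ax2. Qed.
Lemma wedge_r G X Y: prv G (fwedge X Y =>> Y).
Proof. eapply trans. apply AX, (ax4 X Y). apply AX, ax2. Qed.

Lemma vee_elim_thm G a b c : prv G ((a=>>c)=>>((b=>>c)=>>(fvee a b =>> c))).
Proof.
  assert (c1 : prv G ((b=>>c) =>> ((a=>>b) =>> (fvee a b=>>c)))).
  { eapply ctx_post. apply exch. apply wedge_l. apply prefix. }
  assert (c2 : prv G ((a=>>c) =>> ((b=>>a) =>> (fvee a b=>>c)))).
  { eapply ctx_post. apply exch. apply wedge_r. apply prefix. }
  eapply trans. exact c2. apply exch. eapply trans. exact c1. apply AX, ax7.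
Qed.
Lemma vee_elim G a b c : prv G (a=>>c) -> prv G (b=>>c) -> prv G (fvee a b =>> c).
Proof. intros H1 H2. eapply MP. exact H2. eapply MP. exact H1. apply vee_elim_thm. Qed.

Lemma wedge_intro G h X Y : prv G (h=>>X) -> prv G (h=>>Y) -> prv G (h =>> fwedge X Y).
Proof.
  intros H1 H2.
  assert (c1 : prv G ((X=>>Y)=>>(h=>>fwedge X Y))).
  { apply exch. eapply trans. exact H1. apply pairing. }
  assert (c2 : prv G ((Y=>>X)=>>(h=>>fwedge X Y))).
  { eapply ctx_pre. apply exch. eapply trans. exact H2. apply pairing. apply AX, ax4. }
  eapply MP. exact c2. eapply MP. exact c1. apply AX, ax7.
Qed.

Lemma vee_intro_l G a c : prv G (a =>> fvee a c).
Proof. apply wedge_intro. apply assertion. apply weak. Qed.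
Lemma vee_comm G a b : prv G (fvee a b =>> fvee b a). Proof. apply AX, ax4. Qed.
Lemma vee_intro_r G a c : prv G (c =>> fvee a c).
Proof. eapply trans. apply vee_intro_l. apply vee_comm. Qed.

Lemma M1 G p q c : prv G ((p=>>q) =>> (fvee p c =>> fvee q c)).
Proof.
  eapply trans. eapply MP. apply (vee_intro_l G q c). apply prefix.
  eapply MP. apply (vee_intro_r G q c). apply exch. apply vee_elim_thm.
Qed.
Lemma M2 G p q c : prv G (c =>> (fvee p c =>> fvee q c)).
Proof. eapply trans. apply (vee_intro_r G q c). apply weak. Qed.
Lemma mp_vee G p q c : prv G (fvee p c) -> prv G (fvee (p=>>q) c) -> prv G (fvee q c).
Proof.
  intros H1 H2. eapply MP. exact H1. eapply MP. exact H2.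
  apply vee_elim. apply M1. apply M2.
Qed.
Lemma vee_mono G a b c : prv G (a=>>b) -> prv G (fvee a c =>> fvee b c).
Proof. intros H. apply vee_elim. eapply trans. exact H. apply vee_intro_l. apply vee_intro_r. Qed.
Lemma vee_swap G p q c : prv G (fvee (fvee p q) c =>> fvee (fvee p c) q).
Proof.
  apply vee_elim. apply vee_elim.
  eapply trans. apply (vee_intro_l G p c). apply vee_intro_l.
  apply vee_intro_r.
  eapply trans. apply (vee_intro_r G p c). apply vee_intro_l.
Qed.

Lemma cut G G' p : prv G' p -> (forall f, G' f -> prv G f) -> prv G p.
Proof.
  intros H HG. induction H.
  - apply prv_ax; auto.
  - auto.
  - exact (prv_mp _ _ _ IHprv1 IHprv2).
  - apply prv_gen; auto.
  - apply prv_inf; auto.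
Qed.

Lemma sentence_fvee p q : sentence p -> sentence q -> sentence (fvee p q).
Proof. intros Hp Hq x. simpl. rewrite Hp, Hq. reflexivity. Qed.

Lemma hyp_new G a : prv (add G a) a. Proof. apply prv_hyp. right. reflexivity. Qed.
Lemma hyp_old G a f : G f -> prv (add G a) f. Proof. intros. apply prv_hyp. left. auto. Qed.

Lemma keyL G alpha chi phi : sentence alpha -> sentence chi ->
  prv (add G alpha) phi -> prv (add G (fvee alpha chi)) (fvee phi chi).
Proof.
  intros Ha Hc H. induction H.
  - eapply MP. apply prv_ax, H. apply vee_intro_l.
  - destruct H as [H|H].
    + eapply MP. apply hyp_old, H. apply vee_intro_l.
    + subst. apply hyp_new.
  - exact (mp_vee _ _ _ _ IHprv1 IHprv2).
  - eapply MP. apply prv_gen, IHprv. apply AX, ax_lin, Hc.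
  - eapply MP. 2: apply vee_swap.
    apply prv_inf; auto. apply sentence_fvee; auto.
    intros n. eapply MP. apply H3. apply vee_swap.
Qed.

Fixpoint close (l : list nat) (p : form) : form :=
  match l with [] => p | x :: l' => fall x (close l' p) end.

Lemma subst_id x q : subst x (tvar x) q = q.
Proof.
  induction q; simpl; try congruence.
  - f_equal. induction l as [|t l IH]; simpl; auto. rewrite IH. f_equal.
    destruct t as [m|m]; simpl; auto. destruct (Nat.eqb_spec x m); subst; auto.
  - destruct (Nat.eqb x n); congruence.
  - destruct (Nat.eqb x n); congruence.
Qed.

Lemma substitutable_id x q : substitutable x (tvar x) q = true.
Proof.
  induction q; simpl; auto; try (rewrite IHq1, IHq2; auto).
  - destruct (Nat.eqb_spec x n); auto. rewrite IHq. simpl.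
    destruct (Nat.eqb_spec n x); try congruence. rewrite orb_true_r. auto.
  - destruct (Nat.eqb_spec x n); auto. rewrite IHq. simpl.
    destruct (Nat.eqb_spec n x); try congruence. rewrite orb_true_r. auto.
Qed.

Lemma close_elim G l p : prv G (close l p =>> p).
Proof.
  induction l; simpl. apply idf.
  eapply trans. 2: exact IHl.
  pose proof (ax_all1 a (tvar a) (close l p) (substitutable_id _ _)) as A.
  rewrite subst_id in A. apply AX, A.
Qed.

Lemma close_intro G l p : prv G p -> prv G (close l p).
Proof. intros H; induction l; simpl; auto. apply prv_gen; auto. Qed.

Fixpoint fvt (ts : list term) : list nat :=
  match ts with [] => [] | tvar y :: r => y :: fvt r | tconst _ :: r => fvt r end.
Fixpoint fv (p : form) : list nat :=
  match p with
  | fatom _ ts => fvt ts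
  | fimp a b | fconj a b => fv a ++ fv b
  | fzero => []
  | fall _ a | fex _ a => fv a
  end.

Lemma fv_spec x p : free_in x p = true -> In x (fv p).
Proof.
  induction p; simpl; intros H.
  - induction l as [|t l IH]; simpl in *; try discriminate.
    destruct t; simpl in *.
    + apply orb_true_iff in H. destruct H as [H|H]. apply Nat.eqb_eq in H; auto.
      right; auto.
    + auto.
  - apply in_or_app. apply orb_true_iff in H. destruct H; auto.
  - apply in_or_app. apply orb_true_iff in H. destruct H; auto.
  - discriminate.
  - destruct (Nat.eqb x n); auto. discriminate.
  - destruct (Nat.eqb x n); auto. discriminate.
Qed.

Lemma close_free x l p : free_in x (close l p) = true -> free_in x p = true /\ ~ In x l.
Proof.
  induction l; simpl; intros H. auto.
  destruct (Nat.eqb_spec x a). discriminate.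
  destruct (IHl H). split; auto. intros [->|?]; auto.
Qed.

Lemma close_sentence p : sentence (close (fv p) p).
Proof.
  intros x. destruct (free_in x (close (fv p) p)) eqn:E; auto.
  destruct (close_free _ _ _ E) as [H1 H2]. exfalso. apply H2, fv_spec, H1.
Qed.

Theorem mainTheorem3 (G : theory) (alpha phi psi beta : form) :
  sentence alpha ->
  prv (add G alpha) phi ->
  prv (add G beta) psi ->
  prv (add G (fvee alpha beta)) (fvee phi psi).
Proof.
  intros Ha H1 H2.
  set (phi' := close (fv phi) phi). set (beta' := close (fv beta) beta).
  assert (Sp : sentence phi') by apply close_sentence.
  assert (Sb : sentence beta') by apply close_sentence.
  set (T := add G (fvee alpha beta)).
  assert (C : forall l, prv T (fvee (close l beta) alpha)).
  { induction l; simpl.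
    - eapply MP. apply hyp_new. apply vee_comm.
    - eapply MP. apply prv_gen, IHl. apply AX, ax_lin, Ha. }
  assert (S2 : prv (add G (fvee alpha beta')) (fvee phi' beta')).
  { apply keyL; auto. apply close_intro; auto. }
  assert (S3 : prv (add G beta') psi).
  { eapply cut. exact H2. intros f [Hf|Hf]. apply hyp_old; auto.
    subst. eapply MP. apply hyp_new. apply close_elim. }
  assert (S4 : prv (add G (fvee beta' phi')) (fvee psi phi')) by (apply keyL; auto).
  assert (T1 : prv T (fvee phi' beta')).
  { eapply cut. exact S2. intros f [Hf|Hf]. apply hyp_old; auto.
    subst. eapply MP. apply C. apply vee_comm. }
  assert (T2 : prv T (fvee psi phi')).
  { eapply cut. exact S4. intros f [Hf|Hf]. apply hyp_old; auto.
    subst. eapply MP. apply T1. apply vee_comm. }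
  eapply MP. eapply MP. exact T2. apply vee_comm.
  apply vee_mono. apply close_elim.
Qed.
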